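(* Let $k\in\mathbb{N}$ and $n\in\mathbb{N}\cup\{\omega\}$ with $3\le k\le n$. Then: (1) if $n$ is finite, $Q(n,k)\ge \binom{n}{\lfloor (k-1)/2\rfloor}$; (2) if $n=\omega$, $Q(\omega,k)=+\infty$, i.e. $\mathbb{Z}_2^\omega$ admits no partition into finitely many $k$-thin sets.
   Context: For $n\in\mathbb{N}\cup\{\omega\}$, $\mathbb{Z}_2^n$ is the set of binary sequences of length $n$ (indexed by $\{0,\dots,n-1\}$, resp. by $\omega=\{0,1,2,\dots\}$). The Hamming distance is $\mathrm{hd}(x,y)=|\{i: x(i)\ne y(i)\}|$, and the minimum distance of $T\subseteq\mathbb{Z}_2^n$ is $\mathrm{HD}(T)=\inf\{\mathrm{hd}(x,y): x,y\in T, x\ne y\}$ (infimum of the empty set being $+\infty$). A set $T\subseteq\mathbb{Z}_2^n$ is $k$-thin if $\mathrm{HD}(T)\ge k$. For $2\le k\le n$, $Q(n,k)$ is the smallest extended natural number $s$ such that $\mathbb{Z}_2^n$ can be partitioned into $s$ sets that are $k$-thin ($+\infty$ if there is no such finite $s$). *)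

(* Defs.v *)
From mathcomp Require Import all_boot.
Set Implicit Arguments. Unset Strict Implicit. Unset Printing Implicit Defensive.

Definition word (n : nat) := {ffun 'I_n -> bool}.

Definition hd (n : nat) (x y : word n) : nat := #|[set i | x i != y i]|.

Definition thin (n k : nat) (T : pred (word n)) : Prop :=
  forall x y, T x -> T y -> x != y -> k <= hd x y.

Definition partitionable (n k s : nat) : Prop :=
  exists c : word n -> 'I_s, forall j : 'I_s, thin k (fun x => c x == j).

(* Infinite words: Z_2^omega = nat -> bool. hd(x,y) >= k (hd possibly infinite)
   means there are at least k indices where x and y differ. *)
Definition hd_ge_omega (k : nat) (x y : nat -> bool) : Prop :=
  exists s : seq nat, [/\ uniq s, size s = k & forall i, i \in s -> x i != y i].

Definition thin_omega (k : nat) (T : (nat -> bool) -> Prop) : Prop :=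
  forall x y, T x -> T y -> x <> y -> hd_ge_omega k x y.

Definition partitionable_omega (k s : nat) : Prop :=
  exists c : (nat -> bool) -> 'I_s, forall j : 'I_s, thin_omega k (fun x => c x = j).

(* Main.v *)
Require Import Defs.
From mathcomp Require Import all_boot.
From mathcomp Require Import zify.

Lemma part1 (k : nat) (hk : 3 <= k) n s : partitionable n k s -> 'C(n, (k - 1)./2) <= s.
Proof.
case=> c Hc.
set r := (k - 1)./2.
have r2 : r + r < k.
  rewrite addnn /r; have := odd_double_half (k - 1).
  case: (odd (k-1)) => /= H; lia.
pose w (A : {set 'I_n}) : word n := [ffun i => i \in A].
pose g A := c (w A).
have inj : {in [set A : {set 'I_n} | #|A| == r] &, injective g}.
  move=> A B; rewrite !inE => /eqP HA /eqP HB Hg.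
  case: (boolP (A == B)) => [/eqP //|nAB].
  have nw : w A != w B.
    apply: contra nAB => /eqP E; apply/eqP/setP => i.
    by have := congr1 (fun f : word n => f i) E; rewrite /w !ffunE.
  have := Hc (g A) (w A) (w B) (eqxx _) (introT eqP (esym Hg)) nw.
  rewrite /hd.
  have sub : [set i | w A i != w B i] \subset A :|: B.
    apply/subsetP => i; rewrite !inE /w !ffunE.
    by case: (i \in A); case: (i \in B).
  have := subset_leq_card sub.
  have := leq_card_setU A B. case => H _.
  rewrite HA HB in H. move=> H1 H2. by move: r2; rewrite ltnNge (leq_trans H2 (leq_trans H1 H)).
have := @leq_card_in _ _ g _ inj.
by rewrite card_draws card_ord card_ord.
Qed.

Lemma part2 (k : nat) (hk : 3 <= k) s : ~ partitionable_omega k s.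
Proof.
case=> c Hc.
pose e (m : 'I_s.+1) : nat -> bool := fun i => i == m.
have inj : injective (fun m => c (e m)).
  move=> a b Hab.
  case: (boolP (a == b)) => [/eqP //|nab].
  have ne : e a <> e b.
    move=> E; have := congr1 (fun f => f (nat_of_ord a)) E.
    rewrite /e eqxx => /esym/eqP H; move: nab; rewrite -(inj_eq val_inj) /= H eqxx /=; done.
  have [l [ul sl Hl]] := Hc (c (e a)) (e a) (e b) erefl (esym Hab) ne.
  have : size l <= size [:: nat_of_ord a; nat_of_ord b].
    apply: uniq_leq_size => // i /Hl; rewrite /e !inE.
    by case: (i == a); case: (i == b).
  rewrite sl /=. lia.
have := @leq_card _ _ _ inj. rewrite !card_ord. lia.
Qed.

Theorem proposition17 (k : nat) (hk : 3 <= k) :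
  (forall n : nat, k <= n ->
     forall s : nat, partitionable n k s -> 'C(n, (k - 1)./2) <= s)
  /\ (forall s : nat, ~ partitionable_omega k s).
Proof.
split; first by move=> n _ s; exact: part1.
exact: part2.
Qed.
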